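(* Let $n\geq 2$ and let $t\geq 2$ be even. Then no vertex of $D^*_{n,t}=D_{n,t}\setminus\{1^t\}$ is adjacent to $1^t$ in $S(K_n,t)$.
   Context: For a positive integer $n$ let $[n]=\{1,\dots,n\}$. For positive integers $n,t$, the Sierpiński graph $S(K_n,t)$ is the simple graph with vertex set $[n]^t$ (words $v_1v_2\cdots v_t$ with $v_i\in[n]$), in which $u_1\cdots u_t$ and $v_1\cdots v_t$ are adjacent if and only if there is $s\in[t]$ with $u_j=v_j$ for all $j<s$, $u_s\neq v_s$, and $u_j=v_s$ and $v_j=u_s$ for all $j>s$. Write $a^k$ for the word consisting of $k$ copies of the letter $a$. The sets $D_{n,t}\subseteq[n]^t$ are defined recursively: $D_{n,1}=\{1\}$, $D_{n,2}=\{11,21,\dots,n1\}$. For $t\geq 3$ and $\mathbf v=v_1\cdots v_{t-2}\in D_{n,t-2}$ put $E_1(\mathbf v)=\{v_1\cdots v_{t-2}\alpha\alpha:\alpha\in[n]\}$, $E_2(\mathbf v)=\{v_1\cdots v_{t-3}\alpha\beta v_{t-2}:\alpha,\beta\in[n]\setminus\{v_{t-2}\}\}$, and, if $\mathbf v$ is not a constant word, let $\ell$ be the largest index in $[t-3]$ with $v_\ell\neq v_{\ell+1}$ and put $E_3(\mathbf v)=\{v_1\cdots v_{\ell-1}v_{\ell+1}v_\ell^{\,t-\ell-2}\alpha v_\ell:\alpha\in[n]\setminus\{v_\ell\}\}$. If $t\geq 3$ is odd, $D_{n,t}=E_1(1^{t-2})\cup E_2(1^{t-2})\cup\bigcup_{\mathbf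 v\in D_{n,t-2}\setminus\{1^{t-2}\}}\big(E_1(\mathbf v)\cup E_2(\mathbf v)\cup E_3(\mathbf v)\big)$. If $t\geq 4$ is even, $D_{n,t}=\{1^{t-2}\alpha1:\alpha\in[n]\}\cup\bigcup_{\mathbf v\in D_{n,t-2}\setminus\{1^{t-2}\}}\big(E_1(\mathbf v)\cup E_2(\mathbf v)\cup E_3(\mathbf v)\big)$. (In this recursion $1^{t-2}\in D_{n,t-2}$ is the only constant word in $D_{n,t-2}$, so $E_3$ is applied only to non-constant words.) *)

(* Defs.v *)
(* Words over [n] are represented as `seq nat`
   (letters 1..n, positions 0-indexed). *)
From mathcomp Require Import all_boot.
Set Implicit Arguments. Unset Strict Implicit. Unset Printing Implicit Defensive.

Definition is_word (n t : nat) (w : seq nat) : Prop :=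
  size w = t /\ (forall i, i < t -> 1 <= nth 0 w i <= n).

Definition sier_adj (n t : nat) (u v : seq nat) : Prop :=
  is_word n t u /\ is_word n t v /\
  exists s, s < t /\
    (forall j, j < s -> nth 0 u j = nth 0 v j) /\
    nth 0 u s <> nth 0 v s /\
    (forall j, s < j < t -> nth 0 u j = nth 0 v s /\ nth 0 v j = nth 0 u s).

Definition letters (n : nat) : seq nat := iota 1 n.

Definition constant_word (v : seq nat) : bool :=
  all (fun x => x == head 0 v) v.

Definition E1 (n : nat) (v : seq nat) : seq (seq nat) :=
  [seq v ++ [:: a; a] | a <- letters n].

Definition E2 (n : nat) (v : seq nat) : seq (seq nat) :=
  let k := size v in
  let vk := last 0 v in
  [seq take k.-1 v ++ [:: a; b; vk]
     | a <- [seq x <- letters n | x != vk], b <- [seq x <- letters n | x != vk]].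

(* 0-indexed position i = ell - 1 of the largest ell in [k-1] with
   v_ell <> v_{ell+1} (k = size v). *)
Definition last_change (v : seq nat) : nat :=
  last 0 [seq i <- iota 0 (size v).-1 | nth 0 v i != nth 0 v i.+1].

(* E_3(v) = { v_1 ... v_{ell-1} v_{ell+1} v_ell^{t-ell-2} a v_ell : a <> v_ell },
   where t = size v + 2; empty if v is constant (E_3 is only defined for
   non-constant words). In 0-indexed terms with i = ell-1: the power is
   t - ell - 2 = size v - i - 1. *)
Definition E3 (n : nat) (v : seq nat) : seq (seq nat) :=
  if constant_word v then [::] else
  let i := last_change v in
  let vl := nth 0 v i in
  [seq take i v ++ [:: nth 0 v i.+1] ++ nseq (size v - i - 1) vl ++ [:: a; vl]
     | a <- [seq x <- letters n | x != vl]].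

Definition Estep (n : nat) (v : seq nat) : seq (seq nat) :=
  E1 n v ++ E2 n v ++ E3 n v.

(* The sets D_{n,t}, as (possibly repeating) lists; only membership matters. *)
Fixpoint D (n t : nat) {struct t} : seq (seq nat) :=
  match t with
  | 0 => [::]
  | 1 => [:: [:: 1]]
  | t'.+2 =>
      let prev := D n t' in
      let rest := flatten [seq Estep n v | v <- prev & v != nseq t' 1] in
      if t' == 0 then [seq [:: a; 1] | a <- letters n]
      else if odd t then E1 n (nseq t' 1) ++ E2 n (nseq t' 1) ++ rest
      else [seq nseq t' 1 ++ [:: a; 1] | a <- letters n] ++ rest
  end.

(* Main.v *)
Require Import Defs.
From mathcomp Require Import all_boot.
From mathcomp Require Import zify.

Lemma last_change_lt (v : seq nat) : 1 <= size v -> last_change v < size v.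
Proof.
move=> h; rewrite /last_change.
have := mem_last 0 [seq i <- iota 0 (size v).-1 | nth 0 v i != nth 0 v i.+1].
rewrite inE => /orP [/eqP -> //| ].
rewrite mem_filter mem_iota => /andP [_ /andP [_ H]].
by rewrite add0n in H; exact: (leq_trans H (leq_pred _)).
Qed.

Lemma last_change_lt2 (v : seq nat) : 2 <= size v -> last_change v < (size v).-1.
Proof.
move=> h; rewrite /last_change.
have := mem_last 0 [seq i <- iota 0 (size v).-1 | nth 0 v i != nth 0 v i.+1].
rewrite inE => /orP [/eqP -> | ]; first lia.
rewrite mem_filter mem_iota => /andP [_ /andP [_ H]].
by rewrite add0n in H.
Qed.

Lemma Estep_size n v w : 1 <= size v -> w \in Estep n v -> size w = (size v).+2.
Proof.
move=> hv; rewrite /Estep !mem_cat => /orP [|/orP []].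
- by case/mapP => a _ ->; rewrite size_cat /= addn2.
- case/allpairsP => [[a b] /= [_ _ ->]]; rewrite size_cat size_take /=.
  case: ltnP => _H; lia.
- rewrite /E3; case: ifP => // _; case/mapP => a _ ->.
  have := @last_change_lt v hv.
  rewrite !size_cat size_take /= size_nseq; case: ltnP => _H; lia.
Qed.

Lemma D_size n t : forall w, w \in D n t -> size w = t.
Proof.
elim: t {-2}t (leqnn t) => [|m IH] t ht w.
  by have -> : t = 0 by lia.
case: t ht => [//|[|t]] ht.
  by rewrite /= inE => /eqP ->.
rewrite /=; case: ifP => [/eqP -> | tn0].
  by case/mapP => a _ ->.
have Hrest : w \in flatten [seq Estep n v | v <- D n t & v != nseq t 1] -> size w = t.+2.
  case/flatten_mapP => v; rewrite mem_filter => /andP [_ hv] hw.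
  have sv := IH t ltac:(lia) v hv.
  by rewrite (@Estep_size n v w _ hw) sv //; move: tn0; case: (t).
case: ifP => _; rewrite !mem_cat.
- case/orP => [|/orP [|/Hrest //]].
  + move=> h; rewrite (@Estep_size n (nseq t 1) w) ?size_nseq //; first lia.
    by rewrite /Estep mem_cat h.
  + move=> h; rewrite (@Estep_size n (nseq t 1) w) ?size_nseq //; first lia.
    by rewrite /Estep !mem_cat h orbT.
- case/orP => [/mapP [a _ ->]|/Hrest //]; rewrite size_cat size_nseq /=; lia.
Qed.

Lemma nthT m c j : nth 0 (nseq m 1 ++ [:: c]) j =
  if j < m then 1 else if j == m then c else 0.
Proof.
rewrite nth_cat size_nseq; case: ltnP => h; first by rewrite nth_nseq h.
case E: (j - m) => [|k] /=.
  by have -> : j == m by lia.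
have -> : (j == m) = false by lia.
by rewrite nth_nil.
Qed.

Lemma key n : forall t, ~~ odd t -> 2 <= t -> forall w c, w \in D n t -> c != 1 ->
  w <> nseq t.-1 1 ++ [:: c].
Proof.
move=> t; elim: t {-2}t (leqnn t) => [|m IH] t ht hev h2 w c hw hc.
  lia.
case: t ht hev h2 hw => [|[|t]] ht hev h2 //.
have nt := fun (u : seq nat) j (E : u = nseq t.+1 1 ++ [:: c]) =>
  congr1 (fun s => nth 0 s j) E.
rewrite /=; case: ifP => [/eqP -> | tn0].
  case/mapP => a _ -> /= [_ e].
  by rewrite -e in hc.
rewrite /= in hev; rewrite (negbTE hev) mem_cat => /orP [].
  case/mapP => a _ -> E; have := nt _ t.+1 E; rewrite nthT ltnn eqxx.
  rewrite nth_cat size_nseq ltnNge leqnSn /= subSnn /= => e.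
  by rewrite -e in hc.
case/flatten_mapP => v; rewrite mem_filter => /andP [_ hv] hwv.
have sv := @D_size n t v hv.
have hev' : ~~ odd t by move: hev; rewrite !negbK.
have t2 : 2 <= t by move: tn0 hev'; case: (t) => [|[|k]].
rewrite /Estep /E1 /E2 !mem_cat in hwv; case/orP: hwv => [|/orP []].
- case/mapP => a _ -> E.
  have := nt _ t E; have := nt _ t.+1 E.
  rewrite !nthT ltnn eqxx ltnSn !nth_cat sv ltnn ltnNge leqnSn /= subnn subSnn /=.
  move=> e1 e2; by rewrite -e1 e2 in hc.
- case/allpairsP => [[a b] /= [_ _ ->]] E.
  have Hj : forall j, j < t.+2 -> nth 0 (take (size v).-1 v ++ [:: a; b; last 0 v]) j
            = nth 0 (nseq t.+1 1 ++ [:: c]) j by move=> j _; rewrite E.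
  have stake : size (take (size v).-1 v) = t.-1 by rewrite size_take sv; case: ltnP => _H; lia.
  have hl : last 0 v = c.
    have := Hj t.+1 (ltnSn _); rewrite nthT ltnn eqxx nth_cat stake.
    have -> : (t.+1 < t.-1) = false by lia.
    by have -> : t.+1 - t.-1 = 2 by lia.
  apply: (IH t _ hev' t2 v c hv hc); first lia.
  apply: (@eq_from_nth _ 0); first by rewrite size_cat size_nseq sv /=; lia.
  move=> j; rewrite sv => hj; rewrite nthT.
  case: ltnP => hj2.
    have := Hj j ltac:(lia); rewrite nthT.
    have -> : j < t.+1 by lia.
    rewrite nth_cat stake hj2 nth_take //; lia.
  have -> : j == t.-1 by lia.
  by rewrite -hl -nth_last sv; have -> : j = t.-1 by lia.
- rewrite /E3; case: ifP => // _; case/mapP => a _ -> E.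
  set i := last_change v in E.
  have hi : i < (size v).-1 by apply: last_change_lt2; rewrite sv.
  have si : size (take i v) = i by rewrite size_take; case: ltnP => _H; lia.
  have := nt _ i.+1 E; have := nt _ t.+1 E.
  rewrite !nthT ltnn eqxx.
  have -> : i.+1 < t.+1 by lia.
  move=> e1 e2.
  have r1 : (t.+1 < i) = false by lia.
  have r2 : t.+1 - i = (t - i).+1 by lia.
  have r3 : (t - i < size v - i - 1) = false by lia.
  have r4 : t - i - (size v - i - 1) = 1 by lia.
  rewrite nth_cat si r1 r2 /= nth_cat size_nseq r3 r4 /= in e1.
  have r5 : (i.+1 < i) = false by lia.
  have r6 : 0 < size v - i - 1 by lia.
  rewrite nth_cat si r5 subSnn /= nth_cat size_nseq r6 nth_nseq r6 in e2.
  by rewrite -e1 e2 in hc.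
Qed.

Theorem mainTheorem9 (n t : nat) (hn : 2 <= n) (ht : 2 <= t) (hev : ~~ odd t) :
  forall v : seq nat, v \in D n t -> v != nseq t 1 -> ~ sier_adj n t v (nseq t 1).
Proof.
move=> v hv _ [[sv _] [_ [s [hs [hlt [hneq hgt]]]]]].
rewrite nth_nseq hs in hneq.
have hs1 : s = t.-1.
  case: (ltnP s t.-1) => h; last lia.
  have [_ e] := hgt t.-1 ltac:(lia).
  have ht1 : t.-1 < t by lia.
  by rewrite nth_nseq ht1 in e; exfalso; apply: hneq; rewrite -e.
apply: (@key n t hev ht v (nth 0 v s) hv); first exact/eqP.
apply: (@eq_from_nth _ 0); first by rewrite size_cat size_nseq sv /=; lia.
move=> j; rewrite sv => hj; rewrite nthT.
case: ltnP => hj2.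
  by rewrite hlt ?nth_nseq ?hj; lia.
have -> : j == t.-1 by lia.
by rewrite hs1; have -> : j = t.-1 by lia.
Qed.
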